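(* Let $G=\mathbb T^{\mathbb Z}$ (product topology, $\mathbb T=\mathbb R/\mathbb Z$) and $S:G\to G$ the shift $S(x)(n)=x(n+1)$. Let $x=(a_n)_{n\in\mathbb Z}\in G$ where the reals $a_n$ ($n\in\mathbb Z$) together with $1$ are linearly independent over $\mathbb Q$. Then there is no metrizable SIN group $H$ containing $G$ as a topological subgroup together with $t\in H$ such that $txt^{-1}=S(x)$.
   Context: A topological group is SIN if every neighborhood of the identity contains a neighborhood $V$ of the identity with $gVg^{-1}=V$ for all $g$; a metrizable group is SIN iff it admits a compatible two-sided invariant metric. *)

(* Defs.v *)
From Stdlib Require Import Reals ZArith List QArith Qreals.
Open Scope R_scope.

Record TopGroup := {
  tg_car :> Type;
  tg_mul : tg_car -> tg_car -> tg_car;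
  tg_inv : tg_car -> tg_car;
  tg_one : tg_car;
  tg_open : (tg_car -> Prop) -> Prop;
  tg_assoc : forall a b c, tg_mul a (tg_mul b c) = tg_mul (tg_mul a b) c;
  tg_mul1l : forall a, tg_mul tg_one a = a;
  tg_mulVl : forall a, tg_mul (tg_inv a) a = tg_one;
  tg_open_full : tg_open (fun _ => True);
  tg_open_empty : tg_open (fun _ => False);
  tg_open_inter : forall U V, tg_open U -> tg_open V ->
      tg_open (fun x => U x /\ V x);
  tg_open_union : forall F : (tg_car -> Prop) -> Prop,
      (forall U, F U -> tg_open U) -> tg_open (fun x => exists U, F U /\ U x);
  tg_mul_cont : forall W, tg_open W -> forall x y, W (tg_mul x y) ->
      exists U V, tg_open U /\ tg_open V /\ U x /\ V y /\
        forall a b, U a -> V b -> W (tg_mul a b);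
  tg_inv_cont : forall W, tg_open W -> tg_open (fun x => W (tg_inv x))
}.

Arguments tg_mul {t} _ _.
Arguments tg_inv {t} _.
Arguments tg_one {t}.
Arguments tg_open {t} _.

Definition nbhd1 {H : TopGroup} (V : H -> Prop) : Prop :=
  exists O, tg_open O /\ O tg_one /\ forall x, O x -> V x.

Definition SIN_group (H : TopGroup) : Prop :=
  forall N : H -> Prop, nbhd1 N ->
    exists V : H -> Prop, nbhd1 V /\ (forall x, V x -> N x) /\
      forall g x, V (tg_mul (tg_mul g x) (tg_inv g)) <-> V x.

Definition metrizable (H : TopGroup) : Prop :=
  exists d : H -> H -> R,
    (forall x y, d x y = 0 <-> x = y) /\
    (forall x y, d x y = d y x) /\
    (forall x y z, d x z <= d x y + d y z) /\
    (forall U : H -> Prop, tg_open U <->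
       forall x, U x -> exists eps, eps > 0 /\ forall y, d x y < eps -> U y).

Record T := mkT { tval : R; tval_range : 0 <= tval < 1 }.

Lemma frac_part_range (r : R) : 0 <= frac_part r < 1.
Proof. destruct (base_fp r) as [H1 H2]; split; [apply Rge_le; exact H1 | exact H2]. Qed.

Definition projT (r : R) : T := mkT (frac_part r) (frac_part_range r).

Definition T_open (U : T -> Prop) : Prop :=
  forall r, U (projT r) -> exists eps, eps > 0 /\
     forall s, Rabs (s - r) < eps -> U (projT s).

Definition T_add (a b : T) : T := projT (tval a + tval b).

Definition G := Z -> T.

Definition G_add (x y : G) : G := fun n => T_add (x n) (y n).
Definition G_zero : G := fun _ => projT 0.

Definition G_open (U : G -> Prop) : Prop :=
  forall x, U x -> exists (l : list Z) (V : Z -> T -> Prop),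
    (forall n, In n l -> T_open (V n) /\ V n (x n)) /\
    (forall y, (forall n, In n l -> V n (y n)) -> U y).

Definition G_shift (x : G) : G := fun n => x (n + 1)%Z.

(* iota : G -> H realises G as a topological subgroup of H:
   an injective homomorphism which is a homeomorphism onto its image
   (with the subspace topology). *)
Definition top_subgroup_embedding (H : TopGroup) (iota : G -> H) : Prop :=
  (forall x y, iota (G_add x y) = tg_mul (iota x) (iota y)) /\
  (forall x y, iota x = iota y -> x = y) /\
  (forall U : G -> Prop, G_open U <->
     exists W : H -> Prop, tg_open W /\ forall x, U x <-> W (iota x)).

(* linear independence over Q of {1} ∪ {a_n : n ∈ Z} (the a_n being distinct
   members of the family indexed by Z) *)
Fixpoint lin_comb (a : Z -> R) (c : Z -> Q) (l : list Z) : R :=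
  match l with
  | nil => 0
  | n :: l' => Q2R (c n) * a n + lin_comb a c l'
  end.

Definition Q_lin_indep_with_1 (a : Z -> R) : Prop :=
  forall (l : list Z) (c : Z -> Q) (c0 : Q), NoDup l ->
    Q2R c0 + lin_comb a c l = 0 ->
    Q2R c0 = 0 /\ forall n, In n l -> Q2R (c n) = 0.

(* Main.v *)
Require Import Defs.
From Stdlib Require Import Reals ZArith List QArith Qreals Lra Lia Classical ProofIrrelevance FunctionalExtensionality.
Open Scope R_scope.

Fixpoint sumM (f : nat -> R) (M : nat) : R :=
  match M with O => 0 | S M' => sumM f M' + f M' end.

Lemma sumM_plus f g M : sumM (fun m => f m + g m) M = sumM f M + sumM g M.
Proof. induction M; simpl; [ring| rewrite IHM; ring]. Qed.

Lemma sumM_scal c f M : sumM (fun m => c * f m) M = c * sumM f M.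
Proof. induction M; simpl; [ring| rewrite IHM; ring]. Qed.

Lemma sumM_const c M : sumM (fun _ => c) M = INR M * c.
Proof. induction M; simpl sumM; [simpl; ring| rewrite IHM, S_INR; ring]. Qed.

Lemma sumM_ext f g M : (forall m, f m = g m) -> sumM f M = sumM g M.
Proof. intros H; induction M; simpl; [reflexivity| rewrite IHM, H; reflexivity]. Qed.

Lemma sumM_ge_first f M : (forall m, 0 <= f m) -> (0 < M)%nat -> f O <= sumM f M.
Proof.
  intros Hf HM; induction M; [lia|]. simpl.
  destruct M; [simpl; lra|]. assert (f O <= sumM f (S M)) by (apply IHM; lia).
  specialize (Hf (S M)); lra.
Qed.

Lemma sumM_exists f M c : sumM f M > INR M * c -> exists m, f m > c.
Proof.
  induction M; simpl sumM; intros H.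
  - simpl in H; lra.
  - rewrite S_INR in H. destruct (Rlt_le_dec c (f M)) as [h|h].
    + exists M; lra.
    + apply IHM; lra.
Qed.

Lemma sin_diff_id A B : sin (B + A) - sin (B - A) = 2 * sin A * cos B.
Proof. rewrite sin_plus, sin_minus; ring. Qed.

Lemma cos_sum_id A B : cos (A + B) + cos (A - B) = 2 * cos A * cos B.
Proof. rewrite cos_plus, cos_minus; ring. Qed.

Lemma tele g phi M :
  2 * sin (PI * g) * sumM (fun m => cos (2 * PI * INR m * g + phi)) M =
  sin (2 * PI * INR M * g - PI * g + phi) - sin (- (PI * g) + phi).
Proof.
  induction M.
  - simpl. replace (2 * PI * 0 * g - PI * g + phi) with (- (PI * g) + phi) by ring. ring.
  - simpl sumM. rewrite Rmult_plus_distr_l, IHM.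
    rewrite <- sin_diff_id. rewrite S_INR.
    replace (2 * PI * INR M * g + phi + PI * g) with (2 * PI * (INR M + 1) * g - PI * g + phi) by ring.
    replace (2 * PI * INR M * g + phi - PI * g) with (2 * PI * INR M * g - PI * g + phi) by ring.
    ring.
Qed.

Lemma tele_bound g phi M : sin (PI * g) <> 0 ->
  Rabs (sumM (fun m => cos (2 * PI * INR m * g + phi)) M) <= / Rabs (sin (PI * g)).
Proof.
  intros Hs. set (S0 := sumM _ M).
  assert (H := tele g phi M). fold S0 in H.
  assert (Hb : Rabs (2 * sin (PI * g) * S0) <= 2).
  { rewrite H. destruct (SIN_bound (2 * PI * INR M * g - PI * g + phi)).
    destruct (SIN_bound (- (PI * g) + phi)). apply Rabs_le; lra. }
  rewrite !Rabs_mult in Hb. rewrite Rabs_right in Hb by lra.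
  assert (Hp : 0 < Rabs (sin (PI * g))) by (apply Rabs_pos_lt; auto).
  apply (Rmult_le_reg_l (Rabs (sin (PI * g)))); auto.
  rewrite Rinv_r by lra. lra.
Qed.

Lemma IZR_pos_INR p : IZR (Z.pos p) = INR (Pos.to_nat p).
Proof. rewrite INR_IZR_INZ, positive_nat_Z; reflexivity. Qed.

Lemma sin_Zperiod x k : sin (x + 2 * PI * IZR k) = sin x.
Proof.
  destruct k as [|p|p].
  - simpl. rewrite Rmult_0_r, Rplus_0_r; auto.
  - rewrite (IZR_pos_INR p).
    replace (x + 2 * PI * INR (Pos.to_nat p)) with (x + 2 * INR (Pos.to_nat p) * PI) by ring.
    apply sin_period.
  - assert (E : IZR (Z.neg p) = - INR (Pos.to_nat p)) by (rewrite <- (IZR_pos_INR p); reflexivity).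
    rewrite E.
    rewrite <- (sin_period (x + 2 * PI * - INR (Pos.to_nat p)) (Pos.to_nat p)).
    f_equal; ring.
Qed.

Lemma cos_Zperiod x k : cos (x + 2 * PI * IZR k) = cos x.
Proof.
  destruct k as [|p|p].
  - simpl. rewrite Rmult_0_r, Rplus_0_r; auto.
  - rewrite (IZR_pos_INR p).
    replace (x + 2 * PI * INR (Pos.to_nat p)) with (x + 2 * INR (Pos.to_nat p) * PI) by ring.
    apply cos_period.
  - assert (E : IZR (Z.neg p) = - INR (Pos.to_nat p)) by (rewrite <- (IZR_pos_INR p); reflexivity).
    rewrite E.
    rewrite <- (cos_period (x + 2 * PI * - INR (Pos.to_nat p)) (Pos.to_nat p)).
    f_equal; ring.
Qed.

Lemma INR_Sp_pos p : 0 < INR (S p).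
Proof. apply lt_0_INR; lia. Qed.

Lemma disc_orth (k : Z) (p : nat) : (k <> 0)%Z -> (Z.abs k <= Z.of_nat p)%Z ->
  sumM (fun m => cos (2 * PI * (IZR k * (INR m / INR (S p))))) (S p) = 0.
Proof.
  intros Hk Hkp. set (g := IZR k / INR (S p)).
  assert (HS := INR_Sp_pos p).
  assert (Hs : sin (PI * g) <> 0).
  { intros H0. apply sin_eq_0_0 in H0. destruct H0 as [z Hz].
    assert (Hz' : IZR k = IZR z * INR (S p)).
    { unfold g in Hz. assert (PI > 0) by apply PI_RGT_0.
      apply (Rmult_eq_reg_l PI); [|lra].
      apply (Rmult_eq_reg_r (/ INR (S p))); [|apply Rinv_neq_0_compat; lra].
      replace (PI * IZR k * / INR (S p)) with (PI * (IZR k / INR (S p))) by (unfold Rdiv; ring).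
      rewrite Hz. field. lra. }
    rewrite INR_IZR_INZ, <- mult_IZR in Hz'. apply eq_IZR in Hz'. subst k.
    rewrite Z.abs_mul in Hkp. rewrite Nat2Z.inj_succ in Hkp.
    assert (z <> 0%Z) by (intro; subst; lia).
    assert (1 <= Z.abs z)%Z by lia.
    rewrite (Z.abs_eq (Z.succ (Z.of_nat p))) in Hkp by lia. nia. }
  assert (H := tele g 0 (S p)).
  rewrite (sumM_ext _ (fun m => cos (2 * PI * INR m * g + 0))).
  2:{ intros m. f_equal. unfold g. field. lra. }
  replace (2 * PI * INR (S p) * g - PI * g + 0) with (- (PI * g) + 2 * PI * IZR k) in H.
  2:{ unfold g. field. lra. }
  rewrite sin_Zperiod, Rplus_0_r, Rminus_diag in H.
  apply Rmult_integral in H. destruct H as [H|H]; auto.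
  exfalso. apply Rmult_integral in H. destruct H; lra.
Qed.

Definition term := (R * (Z -> Z))%type.

Fixpoint dot (L : list Z) (c : Z -> Z) (u : Z -> R) : R :=
  match L with nil => 0 | n :: L' => IZR (c n) * u n + dot L' c u end.

Fixpoint evalT (L : list Z) (T : list term) (u : Z -> R) : R :=
  match T with nil => 0 | (al, c) :: T' => al * cos (2 * PI * dot L c u) + evalT L T' u end.

Definition isZ (L : list Z) (c : Z -> Z) : bool := forallb (fun n => Z.eqb (c n) 0) L.

Fixpoint meanT (L : list Z) (T : list term) : R :=
  match T with nil => 0 | (al, c) :: T' => (if isZ L c then al else 0) + meanT L T' end.

Definition mult2 (p q : term) : list term :=
  let (al, c) := p in let (be, d) := q in
  (al * be / 2, fun n => (c n + d n)%Z) :: (al * be / 2, fun n => (c n - d n)%Z) :: nil.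

Definition multT (T1 T2 : list term) : list term :=
  flat_map (fun p => flat_map (mult2 p) T2) T1.

Lemma dot_add L c d u : dot L (fun n => (c n + d n)%Z) u = dot L c u + dot L d u.
Proof. induction L; simpl; [ring| rewrite IHL, plus_IZR; ring]. Qed.
Lemma dot_sub L c d u : dot L (fun n => (c n - d n)%Z) u = dot L c u - dot L d u.
Proof. induction L; simpl; [ring| rewrite IHL, minus_IZR; ring]. Qed.
Lemma dot_lin L c a tg m : dot L c (fun n => m * a n - tg n) = m * dot L c a - dot L c tg.
Proof. induction L; simpl; [ring| rewrite IHL; ring]. Qed.
Lemma dot_zeros L c u : (forall n, In n L -> c n = 0%Z) -> dot L c u = 0.
Proof.
  induction L; simpl; intros H; [reflexivity|].
  rewrite H by auto. rewrite IHL by auto. simpl; ring.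
Qed.

Lemma isZ_spec L c : isZ L c = true <-> forall n, In n L -> c n = 0%Z.
Proof.
  unfold isZ. rewrite forallb_forall. split; intros H n Hn; specialize (H n Hn).
  - apply Z.eqb_eq; auto.
  - apply Z.eqb_eq; auto.
Qed.

Lemma evalT_app L T1 T2 u : evalT L (T1 ++ T2) u = evalT L T1 u + evalT L T2 u.
Proof. induction T1 as [|[al c] T1 IH]; simpl; [ring| rewrite IH; ring]. Qed.
Lemma meanT_app L T1 T2 : meanT L (T1 ++ T2) = meanT L T1 + meanT L T2.
Proof. induction T1 as [|[al c] T1 IH]; simpl; [ring| rewrite IH; ring]. Qed.

Lemma evalT_inner L al c T2 u :
  evalT L (flat_map (mult2 (al, c)) T2) u = (al * cos (2 * PI * dot L c u)) * evalT L T2 u.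
Proof.
  induction T2 as [|[be d] T2 IH]; simpl; [ring|].
  rewrite IH, dot_add, dot_sub.
  replace (2 * PI * (dot L c u + dot L d u)) with (2 * PI * dot L c u + 2 * PI * dot L d u) by ring.
  replace (2 * PI * (dot L c u - dot L d u)) with (2 * PI * dot L c u - 2 * PI * dot L d u) by ring.
  transitivity (al * be / 2 * (cos (2 * PI * dot L c u + 2 * PI * dot L d u) +
    cos (2 * PI * dot L c u - 2 * PI * dot L d u)) + al * cos (2 * PI * dot L c u) * evalT L T2 u); [ring|].
  rewrite cos_sum_id. field.
Qed.

Lemma evalT_mult L T1 T2 u : evalT L (multT T1 T2) u = evalT L T1 u * evalT L T2 u.
Proof.
  unfold multT. induction T1 as [|[al c] T1 IH]; simpl; [ring|].
  rewrite evalT_app, evalT_inner, IH. ring.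
Qed.

Definition nonneg (T : list term) := forall p, In p T -> 0 <= fst p.

Lemma nonneg_mult T1 T2 : nonneg T1 -> nonneg T2 -> nonneg (multT T1 T2).
Proof.
  unfold nonneg, multT. intros H1 H2 q Hq.
  apply in_flat_map in Hq. destruct Hq as [[al c] [Hp Hq]].
  apply in_flat_map in Hq. destruct Hq as [[be d] [Hr Hq]].
  specialize (H1 _ Hp). specialize (H2 _ Hr). simpl in H1, H2.
  simpl in Hq. destruct Hq as [<-|[<-|[]]]; simpl;
  unfold Rdiv; apply Rmult_le_pos; try lra; apply Rmult_le_pos; auto.
Qed.

Lemma isZ_add L c d : isZ L c = true -> isZ L d = true ->
  isZ L (fun n => (c n + d n)%Z) = true /\ isZ L (fun n => (c n - d n)%Z) = true.
Proof.
  rewrite !isZ_spec. intros Hc Hd; split; intros n Hn; rewrite Hc, Hd by auto; reflexivity.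
Qed.

Lemma meanT_inner L al c T2 : 0 <= al -> nonneg T2 ->
  meanT L (flat_map (mult2 (al, c)) T2) >= (if isZ L c then al else 0) * meanT L T2.
Proof.
  intros Hal. induction T2 as [|[be d] T2 IH]; intros H2; simpl; [lra|].
  assert (Hbe : 0 <= be) by (apply (H2 (be, d)); simpl; auto).
  assert (IH' : meanT L (flat_map (mult2 (al, c)) T2) >= (if isZ L c then al else 0) * meanT L T2)
    by (apply IH; intros p Hp; apply H2; simpl; auto).
  assert (Hab : 0 <= al * be / 2) by (unfold Rdiv; repeat apply Rmult_le_pos; lra).
  destruct (isZ L c) eqn:Ec; destruct (isZ L d) eqn:Ed.
  - destruct (isZ_add L c d Ec Ed) as [-> ->]. lra.
  - destruct (isZ L (fun n => (c n + d n)%Z)); destruct (isZ L (fun n => (c n - d n)%Z)); lra.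
  - destruct (isZ L (fun n => (c n + d n)%Z)); destruct (isZ L (fun n => (c n - d n)%Z)); lra.
  - destruct (isZ L (fun n => (c n + d n)%Z)); destruct (isZ L (fun n => (c n - d n)%Z)); lra.
Qed.

Lemma meanT_mult L T1 T2 : nonneg T1 -> nonneg T2 ->
  meanT L (multT T1 T2) >= meanT L T1 * meanT L T2.
Proof.
  unfold multT. induction T1 as [|[al c] T1 IH]; intros H1 H2; simpl; [lra|].
  rewrite meanT_app.
  assert (Hal : 0 <= al) by (apply (H1 (al, c)); simpl; auto).
  assert (A := meanT_inner L al c T2 Hal H2).
  assert (B : meanT L (flat_map (fun p => flat_map (mult2 p) T2) T1) >= meanT L T1 * meanT L T2)
    by (apply IH; auto; intros p Hp; apply H1; simpl; auto).
  lra.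
Qed.

Definition zeroZ : Z -> Z := fun _ => 0%Z.
Definition eZ (n : Z) : Z -> Z := fun n' => if Z.eq_dec n' n then 1%Z else 0%Z.
Definition baseT (n : Z) : list term := (1/2, zeroZ) :: (1/2, eZ n) :: nil.
Fixpoint powT (B : list term) (p : nat) : list term :=
  match p with O => (1, zeroZ) :: nil | S p' => multT (powT B p') B end.
Fixpoint prodT (p : nat) (L : list Z) : list term :=
  match L with nil => (1, zeroZ) :: nil | n :: L' => multT (powT (baseT n) p) (prodT p L') end.

Definition bfun (v : R) : R := 1/2 + 1/2 * cos (2 * PI * v).

Fixpoint prodR (L : list Z) (f : Z -> R) : R :=
  match L with nil => 1 | n :: L' => f n * prodR L' f end.

Lemma dot_single L n k c u : NoDup L -> In n L ->
  (forall n', c n' = if Z.eq_dec n' n then k else 0%Z) -> dot L c u = IZR k * u n.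
Proof.
  intros HN Hin Hc. induction L as [|n0 L IH]; [destruct Hin|].
  inversion HN; subst. simpl. destruct Hin as [<-|Hin].
  - rewrite Hc. destruct (Z.eq_dec n0 n0); [|congruence].
    rewrite dot_zeros; [ring|]. intros n' Hn'. rewrite Hc.
    destruct (Z.eq_dec n' n0); [subst; contradiction|reflexivity].
  - rewrite IH by auto. rewrite Hc. destruct (Z.eq_dec n0 n); [subst; contradiction|]. simpl; ring.
Qed.

Lemma dot_zeroZ L u : dot L zeroZ u = 0.
Proof. apply dot_zeros; reflexivity. Qed.

Lemma bfun_range v : 0 <= bfun v <= 1.
Proof. unfold bfun. destruct (COS_bound (2 * PI * v)). lra. Qed.

Lemma evalT_base L n u : NoDup L -> In n L -> evalT L (baseT n) u = bfun (u n).
Proof.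
  intros HN Hin. unfold baseT, bfun. simpl. rewrite dot_zeroZ.
  rewrite (dot_single L n 1 (eZ n) u) by (auto; intros; reflexivity).
  rewrite Rmult_0_r, cos_0, Rmult_1_l. ring.
Qed.

Lemma evalT_pow L B p u : evalT L (powT B p) u = (evalT L B u) ^ p.
Proof.
  induction p; simpl.
  - rewrite dot_zeroZ, Rmult_0_r, cos_0. ring.
  - rewrite evalT_mult, IHp. ring.
Qed.

Lemma evalT_prod Lg p L u : NoDup Lg -> incl L Lg ->
  evalT Lg (prodT p L) u = prodR L (fun n => (bfun (u n)) ^ p).
Proof.
  intros HN. induction L as [|n L IH]; intros Hi; simpl.
  - rewrite dot_zeroZ, Rmult_0_r, cos_0. ring.
  - rewrite evalT_mult, evalT_pow, evalT_base, IH; auto.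
    + intros z Hz; apply Hi; simpl; auto.
    + apply Hi; simpl; auto.
Qed.

Lemma nonneg_base n : nonneg (baseT n).
Proof. intros q [<-|[<-|[]]]; simpl; lra. Qed.
Lemma nonneg_pow B p : nonneg B -> nonneg (powT B p).
Proof.
  intros HB; induction p; simpl.
  - intros q [<-|[]]; simpl; lra.
  - apply nonneg_mult; auto.
Qed.
Lemma nonneg_prod p L : nonneg (prodT p L).
Proof.
  induction L; simpl.
  - intros q [<-|[]]; simpl; lra.
  - apply nonneg_mult; auto. apply nonneg_pow, nonneg_base.
Qed.

Definition freqP (n : Z) (p : nat) (c : Z -> Z) :=
  exists k, (Z.abs k <= Z.of_nat p)%Z /\ forall n', c n' = if Z.eq_dec n' n then k else 0%Z.

Lemma powT_freq n p q : In q (powT (baseT n) p) -> freqP n p (snd q).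
Proof.
  revert q. induction p; simpl; intros q Hq.
  - destruct Hq as [<-|[]]. exists 0%Z. split; [lia|]. intros n'; simpl.
    destruct (Z.eq_dec n' n); reflexivity.
  - unfold multT in Hq. apply in_flat_map in Hq. destruct Hq as [[al c] [Hp Hq]].
    apply in_flat_map in Hq. destruct Hq as [[be d] [Hr Hq]].
    destruct (IHp _ Hp) as [k [Hk Hc]]. simpl in Hc.
    assert (Hd : exists k', (Z.abs k' <= 1)%Z /\ forall n', d n' = if Z.eq_dec n' n then k' else 0%Z).
    { destruct Hr as [E|[E|[]]]; inversion E; subst.
      - exists 0%Z; split; [lia|]. intros n'; unfold zeroZ; destruct (Z.eq_dec n' n); reflexivity.
      - exists 1%Z; split; [lia|]. intros n'; unfold eZ; reflexivity. }
    destruct Hd as [k' [Hk' Hd]].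
    simpl in Hq. destruct Hq as [<-|[<-|[]]]; simpl.
    + exists (k + k')%Z. split; [lia|]. intros n'. rewrite Hc, Hd.
      destruct (Z.eq_dec n' n); reflexivity.
    + exists (k - k')%Z. split; [lia|]. intros n'. rewrite Hc, Hd.
      destruct (Z.eq_dec n' n); reflexivity.
Qed.

Lemma disc_sum Lg n p T : NoDup Lg -> In n Lg -> (forall q, In q T -> freqP n p (snd q)) ->
  sumM (fun m => evalT Lg T (fun _ => INR m / INR (S p))) (S p) = INR (S p) * meanT Lg T.
Proof.
  intros HN Hin. induction T as [|[al c] T IH]; intros HT; cbn [evalT meanT].
  - rewrite sumM_const; ring.
  - rewrite sumM_plus, IH by (intros; apply HT; simpl; auto).
    destruct (HT (al, c)) as [k [Hk Hc]]; [simpl; auto|]. simpl in Hc.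
    rewrite (sumM_ext _ (fun m => al * cos (2 * PI * (IZR k * (INR m / INR (S p)))))).
    2:{ intros m. rewrite (dot_single Lg n k c) by auto. reflexivity. }
    rewrite sumM_scal.
    destruct (Z.eq_dec k 0) as [->|Hk0].
    + assert (isZ Lg c = true) as ->.
      { apply isZ_spec. intros n' _. rewrite Hc. destruct (Z.eq_dec n' n); reflexivity. }
      rewrite (sumM_ext _ (fun _ => 1)) by (intros; rewrite Rmult_0_l, Rmult_0_r; apply cos_0).
      rewrite sumM_const. ring.
    + assert (isZ Lg c = false) as ->.
      { destruct (isZ Lg c) eqn:E; auto. apply isZ_spec with (n := n) in E; auto.
        rewrite Hc in E. destruct (Z.eq_dec n n); congruence. }
      rewrite disc_orth by auto. ring.
Qed.

Lemma mean_pow Lg n p : NoDup Lg -> In n Lg -> meanT Lg (powT (baseT n) p) >= / INR (S p).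
Proof.
  intros HN Hin.
  assert (E := disc_sum Lg n p (powT (baseT n) p) HN Hin (powT_freq n p)).
  assert (Hge : 1 <= sumM (fun m => evalT Lg (powT (baseT n) p) (fun _ => INR m / INR (S p))) (S p)).
  { assert (H0 : evalT Lg (powT (baseT n) p) (fun _ => INR 0 / INR (S p)) = 1).
    { rewrite evalT_pow, evalT_base by auto. unfold bfun. change (INR 0) with 0.
      replace (2 * PI * (0 / INR (S p))) with 0 by (field; apply Rgt_not_eq, INR_Sp_pos).
      rewrite cos_0. replace (1/2 + 1/2 * 1) with 1 by field. apply pow1. }
    rewrite <- H0. apply (sumM_ge_first (fun m => evalT Lg (powT (baseT n) p) (fun _ => INR m / INR (S p)))); [|lia].
    intros m. rewrite evalT_pow, evalT_base by auto. apply pow_le. apply bfun_range. }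
  rewrite E in Hge. assert (HS := INR_Sp_pos p).
  apply Rle_ge. apply (Rmult_le_reg_l (INR (S p))); auto. rewrite Rinv_r; lra.
Qed.

Lemma mean_prod Lg p L : NoDup Lg -> incl L Lg ->
  meanT Lg (prodT p L) >= (/ INR (S p)) ^ length L.
Proof.
  intros HN. assert (HS := INR_Sp_pos p). induction L as [|n L IH]; intros Hi; cbn [prodT length].
  - assert (isZ Lg zeroZ = true) as E by (apply isZ_spec; reflexivity). cbn [meanT length]. rewrite E. change ((/ INR (S p)) ^ 0) with 1. lra.
  - assert (A := meanT_mult Lg (powT (baseT n) p) (prodT p L)
       (nonneg_pow _ p (nonneg_base n)) (nonneg_prod p L)).
    assert (B := mean_pow Lg n p HN (Hi n (or_introl eq_refl))).
    assert (C : meanT Lg (prodT p L) >= (/ INR (S p)) ^ length L)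
      by (apply IH; intros z Hz; apply Hi; simpl; auto).
    assert (D : 0 <= (/ INR (S p)) ^ length L) by (apply pow_le; left; apply Rinv_0_lt_compat; auto).
    assert (D' : 0 <= / INR (S p)) by (left; apply Rinv_0_lt_compat; auto).
    replace ((/ INR (S p)) ^ S (length L)) with (/ INR (S p) * (/ INR (S p)) ^ length L) by reflexivity.
    apply Rle_ge. eapply Rle_trans; [|apply Rge_le, A].
    apply Rmult_le_compat; lra.
Qed.

Lemma Q2R_inject k : Q2R (inject_Z k) = IZR k.
Proof. unfold Q2R, inject_Z; simpl. rewrite Rinv_1; ring. Qed.

Lemma lin_comb_dot a c L : lin_comb a (fun n => inject_Z (c n)) L = dot L c a.
Proof. induction L; simpl; [reflexivity| rewrite IHL, Q2R_inject; reflexivity]. Qed.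

Lemma indep_sin a (Ha : Q_lin_indep_with_1 a) L c : NoDup L -> isZ L c = false ->
  sin (PI * dot L c a) <> 0.
Proof.
  intros HN Hc H0. apply sin_eq_0_0 in H0. destruct H0 as [z Hz].
  assert (Hd : dot L c a = IZR z).
  { apply (Rmult_eq_reg_l PI); [|apply Rgt_not_eq, PI_RGT_0]. rewrite Hz; ring. }
  destruct (Ha L (fun n => inject_Z (c n)) (inject_Z (- z)) HN) as [_ H2].
  - rewrite lin_comb_dot, Hd, Q2R_inject, opp_IZR. ring.
  - assert (isZ L c = true); [|congruence].
    apply isZ_spec. intros n Hn. specialize (H2 n Hn). rewrite Q2R_inject in H2.
    apply eq_IZR_R0; auto.
Qed.

Fixpoint err (L : list Z) (a : Z -> R) (T : list term) : R :=
  match T with nil => 0 | (al, c) :: T' =>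
    (if isZ L c then 0 else Rabs al / Rabs (sin (PI * dot L c a))) + err L a T' end.

Lemma sum_main a (Ha : Q_lin_indep_with_1 a) L T tg M : NoDup L ->
  sumM (fun m => evalT L T (fun n => INR m * a n - tg n)) M >= INR M * meanT L T - err L a T.
Proof.
  intros HN. induction T as [|[al c] T IH]; cbn [evalT meanT err].
  - rewrite sumM_const. lra.
  - rewrite sumM_plus.
    destruct (isZ L c) eqn:Ec.
    + rewrite (sumM_ext _ (fun _ => al)).
      2:{ intros m. rewrite dot_zeros by (apply isZ_spec; auto). rewrite Rmult_0_r, cos_0. ring. }
      rewrite sumM_const. lra.
    + assert (Hs := indep_sin a Ha L c HN Ec).
      rewrite (sumM_ext _ (fun m => al * cos (2 * PI * INR m * dot L c a + (- (2 * PI * dot L c tg))))).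
      2:{ intros m. rewrite dot_lin. f_equal. f_equal. ring. }
      rewrite sumM_scal.
      assert (B := tele_bound (dot L c a) (- (2 * PI * dot L c tg)) M Hs).
      set (S0 := sumM (fun m => cos (2 * PI * INR m * dot L c a + - (2 * PI * dot L c tg))) M) in *.
      assert (Hp : 0 < Rabs (sin (PI * dot L c a))) by (apply Rabs_pos_lt; auto).
      assert (al * S0 >= - (Rabs al / Rabs (sin (PI * dot L c a)))).
      { assert (Rabs (al * S0) <= Rabs al / Rabs (sin (PI * dot L c a))).
        { rewrite Rabs_mult. unfold Rdiv. apply Rmult_le_compat_l; auto. apply Rabs_pos. }
        apply Rle_ge. assert (- (al * S0) <= Rabs (al * S0)) by (rewrite <- Rabs_Ropp; apply RRle_abs). lra. }
      lra.
Qed.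

Lemma bfun_far v d : 0 < d <= 1/2 -> (forall z, d <= Rabs (v - IZR z)) -> bfun v <= bfun d.
Proof.
  intros Hd Hf. set (w := v - IZR (Int_part v)).
  destruct (base_Int_part v) as [B1 B2].
  assert (Hw : 0 <= w < 1) by (unfold w; lra).
  assert (H1 := Hf (Int_part v)). fold w in H1. rewrite Rabs_right in H1 by lra.
  assert (H2 := Hf (Int_part v + 1)%Z). rewrite plus_IZR in H2.
  replace (v - (IZR (Int_part v) + 1)) with (w - 1) in H2 by (unfold w; ring).
  rewrite Rabs_left in H2 by lra.
  assert (Hc : cos (2 * PI * v) = cos (2 * PI * w)).
  { replace (2 * PI * v) with (2 * PI * w + 2 * PI * IZR (Int_part v)) by (unfold w; ring).
    apply cos_Zperiod. }
  unfold bfun. rewrite Hc. assert (PI > 0) by apply PI_RGT_0.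
  assert (cos (2 * PI * w) <= cos (2 * PI * d)); [|lra].
  destruct (Rle_dec w (1/2)).
  - apply cos_decr_1; nra.
  - replace (2 * PI * w) with (- (2 * PI * (1 - w)) + 2 * PI * IZR 1) by (simpl; ring).
    rewrite cos_Zperiod, cos_neg. apply cos_decr_1; nra.
Qed.

Lemma bfun_lt1 d : 0 < d <= 1/2 -> bfun d < 1.
Proof.
  intros Hd. unfold bfun. assert (PI > 0) by apply PI_RGT_0.
  assert (cos (2 * PI * d) < cos 0) by (apply cos_decreasing_1; nra).
  rewrite cos_0 in H0. lra.
Qed.

Lemma prodR_range L f : (forall n, In n L -> 0 <= f n <= 1) -> 0 <= prodR L f <= 1.
Proof.
  induction L as [|m L IHL]; intros Hf; simpl; [lra|].
  assert (0 <= f m <= 1) by (apply Hf; simpl; auto).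
  assert (0 <= prodR L f <= 1) by (apply IHL; intros; apply Hf; simpl; auto).
  split; nra.
Qed.

Lemma prodR_bound L f n0 r : (forall n, In n L -> 0 <= f n <= 1) -> In n0 L -> f n0 <= r -> 0 <= r ->
  prodR L f <= r.
Proof.
  induction L as [|n L IH]; intros Hf Hin Hr Hr0; [destruct Hin|]. simpl.
  assert (0 <= prodR L f <= 1) by (apply prodR_range; intros; apply Hf; simpl; auto).
  assert (0 <= f n <= 1) by (apply Hf; simpl; auto).
  destruct Hin as [->|Hin].
  - nra.
  - assert (prodR L f <= r) by (apply IH; auto; intros; apply Hf; simpl; auto).
    nra.
Qed.

Lemma nat_unbounded r : exists n : nat, r < INR n.
Proof.
  destruct (archimed (Rabs r)) as [H1 _].
  assert (Hr : r <= Rabs r) by apply RRle_abs.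
  assert (Hpos : (0 <= up (Rabs r))%Z).
  { apply le_IZR. assert (0 <= Rabs r) by apply Rabs_pos. simpl; lra. }
  exists (Z.to_nat (up (Rabs r))). rewrite INR_IZR_INZ, Z2Nat.id by auto. lra.
Qed.

Lemma bernoulli h q : 0 <= h -> 1 + INR q * h <= (1 + h) ^ q.
Proof.
  intros Hh. induction q; [simpl; lra|].
  rewrite S_INR. change ((1 + h) ^ S q) with ((1 + h) * (1 + h) ^ q). assert (0 <= INR q) by apply pos_INR. nra.
Qed.

Lemma pow_exists (rho : R) (N : nat) : 0 <= rho < 1 ->
  exists p : nat, rho ^ p * INR (S p) ^ N < 1.
Proof.
  intros [Hr0 Hr1]. destruct (Req_dec rho 0) as [->|Hrz].
  - exists 1%nat. simpl. lra.
  - set (h := / rho - 1).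
    assert (Hh : 0 < h).
    { unfold h. assert (1 < / rho); [|lra].
      rewrite <- Rinv_1. apply Rinv_lt_contravar; lra. }
    set (C := ((INR N + 2) / h) ^ N).
    assert (HC : 0 <= C) by (apply pow_le; unfold Rdiv; apply Rmult_le_pos; [generalize (pos_INR N); lra| left; apply Rinv_0_lt_compat; auto]).
    destruct (nat_unbounded (C / h)) as [q0 Hq0].
    set (q := S q0). assert (Hq : C / h < INR q) by (unfold q; rewrite S_INR; lra).
    assert (Hq1 : 1 <= INR q) by (unfold q; rewrite S_INR; generalize (pos_INR q0); lra).
    exists (q * S N)%nat.
    set (X := rho ^ q). set (Y := INR (S (q * S N))).
    assert (HX0 : 0 <= X) by (apply pow_le; lra).
    assert (HXq : X * (INR q * h) <= 1).
    { assert (E : X * (1 + h) ^ q = 1).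
      { unfold X. rewrite <- Rpow_mult_distr. unfold h.
        replace (rho * (1 + (/ rho - 1))) with 1 by (field; auto). apply pow1. }
      assert (B := bernoulli h q (Rlt_le _ _ Hh)). nra. }
    assert (HY : Y <= INR q * (INR N + 2)).
    { unfold Y. rewrite S_INR, mult_INR, S_INR. nra. }
    assert (HY0 : 0 <= Y) by apply pos_INR.
    assert (HXY : X * Y <= (INR N + 2) / h).
    { assert (X <= / (INR q * h)).
      { assert (0 < INR q * h) by nra.
        apply (Rmult_le_reg_r (INR q * h)); auto. rewrite Rinv_l by lra. lra. }
      assert (0 < INR q * h) by nra.
      apply Rle_trans with (/ (INR q * h) * (INR q * (INR N + 2))).
      - apply Rmult_le_compat; auto.
      - right. field. split; lra. }
    rewrite pow_mult. fold X.
    replace (X ^ S N * Y ^ N) with (X * (X * Y) ^ N) by (rewrite Rpow_mult_distr; simpl; ring).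
    assert ((X * Y) ^ N <= C) by (apply pow_incr; split; [nra|exact HXY]).
    assert (X * C < 1).
    { assert (X <= / (INR q * h)).
      { assert (0 < INR q * h) by nra.
        apply (Rmult_le_reg_r (INR q * h)); auto. rewrite Rinv_l by lra. lra. }
      assert (C < INR q * h).
      { apply (Rmult_lt_reg_r (/ h)). apply Rinv_0_lt_compat; auto.
        replace (INR q * h * / h) with (INR q) by (field; lra). exact Hq. }
      assert (0 < INR q * h) by nra.
      apply Rle_lt_trans with (/ (INR q * h) * C).
      - apply Rmult_le_compat_r; auto.
      - apply (Rmult_lt_reg_l (INR q * h)); auto. rewrite <- Rmult_assoc, Rinv_r by lra. lra. }
    nra.
Qed.

Lemma kronecker a (Ha : Q_lin_indep_with_1 a) (L : list Z) (tg : Z -> R) (d : R) :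
  NoDup L -> 0 < d -> exists m : nat, forall n, In n L ->
    exists z : Z, Rabs (INR m * a n - tg n - IZR z) < d.
Proof.
  intros HN Hd. set (d' := Rmin d (1/2)).
  assert (Hd' : 0 < d' <= 1/2) by (unfold d'; split; [apply Rmin_glb_lt; lra| apply Rmin_r]).
  assert (Hdd : d' <= d) by apply Rmin_l.
  set (rho := bfun d').
  assert (Hrho : 0 <= rho < 1) by (split; [apply bfun_range| apply bfun_lt1; auto]).
  destruct (pow_exists rho (length L) Hrho) as [p Hp].
  set (K := prodT p L). set (mu := meanT L K).
  assert (HS := INR_Sp_pos p).
  assert (Hmu : mu > rho ^ p).
  { assert (A := mean_prod L p L HN (incl_refl L)). fold K mu in A.
    assert (B : rho ^ p < (/ INR (S p)) ^ length L).
    { rewrite pow_inv. apply (Rmult_lt_reg_r (INR (S p) ^ length L)).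
      - apply pow_lt; auto.
      - rewrite Rinv_l by (apply pow_nonzero; lra). exact Hp. }
    lra. }
  set (E := err L a K).
  destruct (nat_unbounded (E / (mu - rho ^ p))) as [M HM].
  assert (HM' : INR M * (mu - rho ^ p) > E).
  { apply (Rmult_lt_reg_r (/ (mu - rho ^ p))). apply Rinv_0_lt_compat; lra.
    replace (INR M * (mu - rho ^ p) * / (mu - rho ^ p)) with (INR M) by (field; lra). exact HM. }
  assert (Hsum := sum_main a Ha L K tg M HN). fold mu E in Hsum.
  destruct (sumM_exists (fun m => evalT L K (fun n => INR m * a n - tg n)) M (rho ^ p)) as [m Hm].
  { lra. }
  exists m. intros n Hn. cbv beta in Hm.
  unfold K in Hm. rewrite evalT_prod in Hm by (auto; apply incl_refl).
  apply NNPP. intros Hno.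
  assert (Hfar : forall z, d' <= Rabs (INR m * a n - tg n - IZR z)).
  { intros z. apply Rnot_lt_le. intros Hlt. apply Hno. exists z. lra. }
  assert (Hb := bfun_far (INR m * a n - tg n) d' Hd' Hfar). fold rho in Hb.
  assert (prodR L (fun n0 => bfun (INR m * a n0 - tg n0) ^ p) <= rho ^ p).
  { apply (prodR_bound L _ n); auto.
    - intros n0 _. destruct (bfun_range (INR m * a n0 - tg n0)). split.
      + apply pow_le; auto.
      + rewrite <- (pow1 p). apply pow_incr. lra.
    - apply pow_incr. split; auto. apply bfun_range.
    - apply pow_le; lra. }
  lra.
Qed.

Lemma Int_part_unique r z : IZR z <= r < IZR z + 1 -> Int_part r = z.
Proof.
  intros [H1 H2]. destruct (base_Int_part r) as [B1 B2].
  assert (A1 : (Int_part r < z + 1)%Z) by (apply lt_IZR; rewrite plus_IZR; lra).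
  assert (A2 : (z < Int_part r + 1)%Z) by (apply lt_IZR; rewrite plus_IZR; lra).
  lia.
Qed.

Lemma frac_Z r z : frac_part (r + IZR z) = frac_part r.
Proof.
  unfold frac_part. destruct (base_Int_part r) as [B1 B2].
  rewrite (Int_part_unique (r + IZR z) (Int_part r + z)) by (rewrite plus_IZR; lra).
  rewrite plus_IZR; ring.
Qed.

Lemma T_eq p q : tval p = tval q -> p = q.
Proof. destruct p, q; simpl; intros ->; f_equal; apply proof_irrelevance. Qed.

Lemma projT_Z r z : projT (r + IZR z) = projT r.
Proof. apply T_eq; simpl; apply frac_Z. Qed.

Lemma tval_projT_small r : 0 <= r < 1 -> tval (projT r) = r.
Proof.
  intros H. simpl. unfold frac_part. rewrite (Int_part_unique r 0) by (simpl; lra). simpl; ring.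
Qed.

Lemma projT_tval p : projT (tval p) = p.
Proof. apply T_eq. apply tval_projT_small, tval_range. Qed.

Lemma projT_add r s : T_add (projT r) (projT s) = projT (r + s).
Proof.
  unfold T_add. simpl. unfold frac_part.
  replace (r - IZR (Int_part r) + (s - IZR (Int_part s))) with
    ((r + s) + IZR (- (Int_part r + Int_part s))) by (rewrite opp_IZR, plus_IZR; ring).
  apply projT_Z.
Qed.

Lemma mulVr (H : TopGroup) (a : H) : tg_mul a (tg_inv a) = tg_one.
Proof.
  rewrite <- (tg_mul1l H (tg_mul a (tg_inv a))).
  rewrite <- (tg_mulVl H (tg_inv a)) at 1.
  rewrite <- tg_assoc. rewrite (tg_assoc H (tg_inv a) a (tg_inv a)).
  rewrite tg_mulVl, tg_mul1l. apply tg_mulVl.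
Qed.

Lemma mulr1 (H : TopGroup) (a : H) : tg_mul a tg_one = a.
Proof. rewrite <- (tg_mulVl H a), tg_assoc, mulVr, tg_mul1l. reflexivity. Qed.

Lemma mul_cancel_l (H : TopGroup) (c a b : H) : tg_mul c a = tg_mul c b -> a = b.
Proof.
  intros E. rewrite <- (tg_mul1l H a), <- (tg_mul1l H b), <- (tg_mulVl H c), <- !tg_assoc, E.
  reflexivity.
Qed.

Lemma inv_one (H : TopGroup) : tg_inv (tg_one : H) = tg_one.
Proof. rewrite <- (mulr1 H (tg_inv tg_one)). apply tg_mulVl. Qed.

Lemma inv_mul (H : TopGroup) (a b : H) : tg_inv (tg_mul a b) = tg_mul (tg_inv b) (tg_inv a).
Proof.
  apply (mul_cancel_l H (tg_mul a b)). rewrite mulVr.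
  rewrite tg_assoc. rewrite <- (tg_assoc H a b (tg_inv b)), mulVr, mulr1, mulVr. reflexivity.
Qed.

Lemma eq_from_div (H : TopGroup) (a b : H) : tg_mul a (tg_inv b) = tg_one -> a = b.
Proof.
  intros E. rewrite <- (mulr1 H a), <- (tg_mulVl H b), tg_assoc, E, tg_mul1l. reflexivity.
Qed.

Lemma box_zero (U : G -> Prop) : G_open U -> U G_zero ->
  exists (l : list Z) (V : Z -> T -> Prop),
    (forall n, In n l -> T_open (V n) /\ V n (projT 0)) /\
    (forall y, (forall n, In n l -> V n (y n)) -> U y).
Proof. intros HU H0. apply (HU G_zero H0). Qed.

Lemma box_delta (l : list Z) (V : Z -> T -> Prop) :
  (forall n, In n l -> T_open (V n) /\ V n (projT 0)) ->
  exists d, 0 < d /\ forall n, In n l -> forall s, Rabs s < d -> V n (projT s).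
Proof.
  induction l as [|n0 l IH]; intros H.
  - exists 1; split; [lra| intros n []].
  - destruct IH as [d [Hd Hl]]; [intros; apply H; simpl; auto|].
    destruct (H n0 (or_introl eq_refl)) as [Ho H0].
    destruct (Ho 0 H0) as [e [He Hs]].
    exists (Rmin d e). split; [apply Rmin_glb_lt; lra|].
    intros n [<-|Hn] s Hs'.
    + apply Hs. rewrite Rminus_0_r. eapply Rlt_le_trans; [exact Hs'| apply Rmin_r].
    + apply Hl; auto. eapply Rlt_le_trans; [exact Hs'| apply Rmin_l].
Qed.

Lemma shift_open (E : G -> Prop) : G_open E -> G_open (fun e => E (G_shift e)).
Proof.
  intros HE e He. destruct (HE _ He) as [l [V [H1 H2]]].
  exists (map (fun n => (n + 1)%Z) l), (fun n => V (n - 1)%Z). split.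
  - intros n' Hn'. apply in_map_iff in Hn'. destruct Hn' as [n [<- Hn]].
    replace (n + 1 - 1)%Z with n by lia. apply H1; auto.
  - intros y Hy. apply H2. intros n Hn.
    assert (A := Hy (n + 1)%Z (in_map (fun n => (n + 1)%Z) l n Hn)).
    replace (n + 1 - 1)%Z with n in A by lia. exact A.
Qed.

Definition A_T (p : T) : Prop := exists z : Z, Rabs (tval p - IZR z) < 1/4.

Lemma A_T_open : T_open A_T.
Proof.
  intros r [z Hz]. simpl in Hz. unfold frac_part in Hz.
  set (w := r - IZR (z + Int_part r)).
  assert (Hw : Rabs w < 1/4) by (unfold w; rewrite plus_IZR; replace (r - (IZR z + IZR (Int_part r))) with (r - IZR (Int_part r) - IZR z) by ring; exact Hz).
  exists (1/4 - Rabs w). split; [lra|].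
  intros s Hs. exists (z + Int_part r - Int_part s)%Z. simpl. unfold frac_part.
  rewrite minus_IZR, plus_IZR.
  replace (s - IZR (Int_part s) - (IZR z + IZR (Int_part r) - IZR (Int_part s))) with ((s - r) + w)
    by (unfold w; rewrite plus_IZR; ring).
  eapply Rle_lt_trans; [apply Rabs_triang|]. lra.
Qed.

Lemma not_A_half : ~ A_T (projT (1/2)).
Proof.
  intros [z Hz]. rewrite tval_projT_small in Hz by lra.
  apply Rabs_def2 in Hz. destruct Hz as [H1 H2].
  destruct (Z_lt_le_dec z 1).
  - assert (z <= 0)%Z by lia. apply IZR_le in H. simpl in H. lra.
  - apply IZR_le in l. simpl in l. lra.
Qed.

Fixpoint shiftn (k : nat) (z : G) : G :=
  match k with O => z | S k' => G_shift (shiftn k' z) end.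

Lemma shiftn_val k z n : shiftn k z n = z (n + Z.of_nat k)%Z.
Proof.
  revert n. induction k; intros n; simpl.
  - f_equal; lia.
  - unfold G_shift. rewrite IHk. f_equal; lia.
Qed.

Fixpoint sumabs (l : list Z) : Z := match l with nil => 0%Z | n :: l' => (Z.abs n + sumabs l')%Z end.
Lemma sumabs_bound l n : In n l -> (Z.abs n <= sumabs l)%Z.
Proof.
  induction l as [|m l IH]; simpl; [tauto|].
  assert (0 <= sumabs l)%Z by (clear; induction l; simpl; lia).
  intros [->|Hn]; [lia|]. specialize (IH Hn). lia.
Qed.

Theorem mainTheorem18 (a : Z -> R) (Ha : Q_lin_indep_with_1 a) :
  let x : G := fun n => projT (a n) in
  ~ exists (H : TopGroup) (iota : G -> H) (t : H),
      top_subgroup_embedding H iota /\ metrizable H /\ SIN_group H /\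
      tg_mul (tg_mul t (iota x)) (tg_inv t) = iota (G_shift x).
Proof.
  intros x [H [iota [t [[Hhom [Hinj Hemb]] [Hmet [HSIN Hconj]]]]]].
  set (c := fun h : H => tg_mul (tg_mul t h) (tg_inv t)).
  assert (Hz0 : G_add G_zero G_zero = G_zero).
  { apply functional_extensionality; intros n. unfold G_add, G_zero. rewrite projT_add, Rplus_0_r. reflexivity. }
  assert (iota0 : iota G_zero = tg_one).
  { apply (mul_cancel_l H (iota G_zero)). rewrite mulr1, <- Hhom, Hz0. reflexivity. }
  assert (c_mul : forall h k, c (tg_mul h k) = tg_mul (c h) (c k)).
  { intros h k. unfold c; cbv beta. rewrite !tg_assoc. f_equal.
    assert (E : tg_mul (tg_mul (tg_mul t h) (tg_inv t)) t = tg_mul t h) by (rewrite <- tg_assoc, tg_mulVl, mulr1; reflexivity).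
    rewrite E. reflexivity. }
  assert (c_one : c tg_one = tg_one) by (unfold c; cbv beta; rewrite mulr1, mulVr; reflexivity).
  assert (open_pre : forall W : H -> Prop, tg_open W -> G_open (fun e => W (iota e))).
  { intros W HW. apply (proj2 (Hemb _)). exists W; split; [auto| intros; reflexivity]. }
  set (xm := fun (m : nat) (n : Z) => projT (INR m * a n)).
  assert (HP : forall m, c (iota (xm m)) = iota (G_shift (xm m))).
  { induction m.
    - assert (E : xm 0%nat = G_zero).
      { apply functional_extensionality; intros n. unfold xm, G_zero. simpl INR. rewrite Rmult_0_l. reflexivity. }
      rewrite E. change (G_shift G_zero) with G_zero. rewrite iota0. exact c_one.
    - assert (E : xm (S m) = G_add (xm m) x).
      { apply functional_extensionality; intros n. unfold xm, G_add, x. rewrite projT_add, S_INR.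
        f_equal. ring. }
      rewrite E, Hhom, c_mul, IHm. change (c (iota x)) with (tg_mul (tg_mul t (iota x)) (tg_inv t)). rewrite Hconj, <- Hhom. reflexivity. }
  assert (T1 : forall g : H, (forall N, nbhd1 N -> N g) -> g = tg_one).
  { intros g Hg. destruct Hmet as [d [Hd0 [Hsym [Htri Hop]]]].
    apply NNPP. intros Hne.
    assert (Hdpos : forall u v, 0 <= d u v).
    { intros u v. assert (d u u = 0) by (apply Hd0; reflexivity).
      assert (A := Htri u v u). rewrite (Hsym v u) in A. lra. }
    set (r := d tg_one g).
    assert (Hr : 0 < r).
    { destruct (Hdpos tg_one g) as [h|h]; [exact h|].
      exfalso. apply Hne. symmetry. apply Hd0. symmetry. exact h. }
    assert (Hb := Hg (fun z => d tg_one z < r)).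
    assert (d tg_one g < r); [|unfold r in *; lra].
    apply Hb. exists (fun z => d tg_one z < r). split; [|split].
    - apply Hop. intros z Hz. exists (r - d tg_one z). split; [lra|].
      intros y Hy. assert (A := Htri tg_one z y). lra.
    - assert (d tg_one tg_one = 0) by (apply Hd0; reflexivity). lra.
    - auto. }
  assert (conj_all : forall y, c (iota y) = iota (G_shift y)).
  { intros y. apply eq_from_div. apply T1. intros N HN.
    destruct (HSIN N HN) as [V [[O [HO [HO1 HOV]]] [HVN HVinv]]].
    assert (HO11 : O (tg_mul tg_one tg_one)) by (rewrite tg_mul1l; auto).
    destruct (tg_mul_cont H O HO _ _ HO11) as [U1 [U2 [HU1 [HU2 [HU1a [HU2a Hprod]]]]]].
    assert (HU1c : U1 (tg_mul (tg_mul t tg_one) (tg_inv t))) by (fold (c tg_one); rewrite c_one; auto).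
    destruct (tg_mul_cont H U1 HU1 _ _ HU1c) as [P [R0 [HP0 [HR0 [HPa [HRa HPR]]]]]].
    destruct (tg_mul_cont H P HP0 t tg_one HPa) as [P1 [Q1 [HP1 [HQ1 [HP1a [HQ1a HPQ]]]]]].
    assert (HQ1c : forall h, Q1 h -> U1 (c h)) by (intros h Hh; apply HPR; auto).
    set (Q2 := fun h : H => U2 (tg_inv h)).
    assert (HQ2 : tg_open Q2) by (apply tg_inv_cont; auto).
    assert (HQ2a : Q2 tg_one) by (unfold Q2; rewrite inv_one; auto).
    set (E1 := fun e => Q1 (iota e)).
    set (E2 := fun e => Q2 (iota (G_shift e))).
    assert (HE1 : G_open E1) by (apply open_pre; auto).
    assert (HE2 : G_open E2) by (apply (shift_open (fun z => Q2 (iota z))); apply open_pre; auto).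
    destruct (box_zero E1 HE1) as [l1 [V1 [HV1 HB1]]]; [unfold E1; rewrite iota0; auto|].
    destruct (box_zero E2 HE2) as [l2 [V2 [HV2 HB2]]];
      [unfold E2; change (G_shift G_zero) with G_zero; rewrite iota0; auto|].
    destruct (box_delta l1 V1 HV1) as [d1 [Hd1 Hd1']].
    destruct (box_delta l2 V2 HV2) as [d2 [Hd2 Hd2']].
    destruct (kronecker a Ha (nodup Z.eq_dec (l1 ++ l2)) (fun n => tval (y n)) (Rmin d1 d2)
      (NoDup_nodup _ _) (Rmin_glb_lt _ _ _ Hd1 Hd2)) as [m Hm].
    set (e := fun n => projT (tval (y n) - INR m * a n)).
    assert (Hclose : forall n, In n (l1 ++ l2) -> exists s, Rabs s < Rmin d1 d2 /\ e n = projT s).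
    { intros n Hn. destruct (Hm n) as [z Hz]; [apply nodup_In; auto|].
      exists (- (INR m * a n - tval (y n) - IZR z)). split; [rewrite Rabs_Ropp; auto|].
      unfold e. replace (- (INR m * a n - tval (y n) - IZR z)) with (tval (y n) - INR m * a n + IZR z) by ring.
      rewrite projT_Z. reflexivity. }
    assert (He1 : E1 e).
    { apply HB1. intros n Hn. destruct (Hclose n) as [s [Hs ->]]; [apply in_app_iff; auto|].
      apply Hd1'; auto. eapply Rlt_le_trans; [exact Hs| apply Rmin_l]. }
    assert (He2 : E2 e).
    { apply HB2. intros n Hn. destruct (Hclose n) as [s [Hs ->]]; [apply in_app_iff; auto|].
      apply Hd2'; auto. eapply Rlt_le_trans; [exact Hs| apply Rmin_r]. }
    assert (Hy : y = G_add (xm m) e).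
    { apply functional_extensionality; intros n. unfold G_add, xm, e. rewrite projT_add.
      replace (INR m * a n + (tval (y n) - INR m * a n)) with (tval (y n)) by ring.
      symmetry; apply projT_tval. }
    rewrite Hy. change (G_shift (G_add (xm m) e)) with (G_add (G_shift (xm m)) (G_shift e)).
    rewrite !Hhom, c_mul, HP.
    set (A := iota (G_shift (xm m))). set (B := c (iota e)). set (C := iota (G_shift e)).
    replace (tg_mul (tg_mul A B) (tg_inv (tg_mul A C))) with
      (tg_mul (tg_mul A (tg_mul B (tg_inv C))) (tg_inv A)).
    2:{ rewrite inv_mul, !tg_assoc. reflexivity. }
    apply HVN. apply HVinv. apply HOV. apply Hprod.
    - apply HQ1c. exact He1.
    - exact He2. }
  set (U := fun y : G => A_T (y 0%Z)).
  assert (HU : G_open U).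
  { intros y Hy. exists (0%Z :: nil), (fun _ => A_T). split.
    - intros n [<-|[]]. split; [apply A_T_open| exact Hy].
    - intros y' Hy'. apply Hy'. simpl; auto. }
  destruct (proj1 (Hemb U) HU) as [W [HW HWU]].
  assert (HW1 : nbhd1 W).
  { exists W. split; [auto|split; [|auto]]. rewrite <- iota0. apply HWU.
    exists 0%Z. unfold G_zero. rewrite tval_projT_small by lra. rewrite Rminus_0_r, Rabs_R0. lra. }
  destruct (HSIN W HW1) as [V [[O [HO [HO1 HOV]]] [HVW HVinv]]].
  destruct (box_zero (fun e => O (iota e)) (open_pre O HO)) as [l [Vb [HVb HBb]]];
    [rewrite iota0; auto|].
  set (K := (1 + sumabs l)%Z).
  set (y := fun n => if Z.eq_dec n K then projT (1/2) else projT 0).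
  assert (Hy : V (iota y)).
  { apply HOV. apply HBb. intros n Hn. unfold y. destruct (Z.eq_dec n K).
    - exfalso. assert (B := sumabs_bound l n Hn). unfold K in e. lia.
    - apply HVb; auto. }
  assert (Hiter : forall k z, V (iota z) -> V (iota (shiftn k z))).
  { induction k; intros z Hz; simpl; auto.
    rewrite <- conj_all. unfold c. apply HVinv. auto. }
  assert (HK : (0 <= K)%Z) by (unfold K; assert (0 <= sumabs l)%Z by (clear; induction l; simpl; lia); lia).
  assert (Hf := HVW _ (Hiter (Z.to_nat K) y Hy)).
  apply HWU in Hf. unfold U in Hf. rewrite shiftn_val, Z2Nat.id in Hf by auto.
  unfold y in Hf. simpl in Hf. destruct (Z.eq_dec K K); [|congruence].
  apply not_A_half. exact Hf.
Qed.
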